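(* Let $X,Y,Z$ be spaces, let $r\colon Y\to Z$ be a surjective continuous map, and let $r_{\ast}\colon Q_{P}(X,Y)\to Q_{P}(X,Z)$ be the induced map $r_{\ast}(f)=r\circ f$. Then $r_{\ast}(Q_{P}(X,Y))$ is dense in $Q_{P}(X,Z)$.
   Context: A function $f\colon X\to Y$ between topological spaces is quasi-continuous at $x\in X$ if for every open $U\ni x$ and every open $V\ni f(x)$ there is a non-empty open $G\subseteq U$ with $f(G)\subseteq V$; $f$ is quasi-continuous if it is so at every point. $Q_{P}(X,Y)$ is the set of quasi-continuous functions $X\to Y$ with the topology of point-wise convergence, whose base consists of the sets $[x_1,\dots,x_n;U_1,\dots,U_n]=\{f: f(x_i)\in U_i,\ 1\le i\le n\}$ with $x_i\in X$, $U_i$ open in $Y$; similarly for $Q_P(X,Z)$. *)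

(* Defs.v *)
From HB Require Import structures.
From mathcomp Require Import all_boot all_order.
From mathcomp Require Import all_classical topology.
Set Implicit Arguments. Unset Strict Implicit. Unset Printing Implicit Defensive.
Local Open Scope classical_set_scope.

Definition quasi_continuous_at (X Y : topologicalType) (f : X -> Y) (x : X) :=
  forall (U : set X) (V : set Y), open U -> U x -> open V -> V (f x) ->
    exists G : set X, [/\ open G, G !=set0, G `<=` U & f @` G `<=` V].

Definition quasi_continuous (X Y : topologicalType) (f : X -> Y) :=
  forall x, quasi_continuous_at f x.

Arguments quasi_continuous : clear implicits.
Definition QP (X Y : topologicalType) : set (X -> Y) :=
  [set f | quasi_continuous X Y f].

Arguments QP : clear implicits.

(* the basic set [x_1,...,x_n; U_1,...,U_n] of the pointwise topology *)
Definition pw_basic (X Z : Type) (n : nat) (xs : 'I_n -> X) (Us : 'I_n -> set Z)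
  : set (X -> Z) := [set f | forall i, Us i (f (xs i))].

Definition dense_in_QP (X Z : topologicalType) (A : set (X -> Z)) :=
  forall (n : nat) (xs : 'I_n -> X) (Us : 'I_n -> set Z),
    (forall i, open (Us i)) ->
    (QP X Z `&` pw_basic xs Us) !=set0 -> (A `&` pw_basic xs Us) !=set0.

(* Main.v *)
Require Import Defs.
From HB Require Import structures.
From mathcomp Require Import all_boot all_order.
From mathcomp Require Import all_classical topology.
Set Implicit Arguments. Unset Strict Implicit.
Local Open Scope classical_set_scope.

Definition Ecell (X : topologicalType) (n : nat) (A : 'I_n -> set X) (S : {set 'I_n}) : set X :=
  [set x | exists O, [/\ open O, O x, (forall i, i \in S -> O `<=` A i)
                     & (forall i, i \notin S -> O `&` A i = set0)]].

Lemma Ecell_open (X : topologicalType) (n : nat) (A : 'I_n -> set X) (S : {set 'I_n}) :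
  open (Ecell A S).
Proof.
rewrite (_ : Ecell A S = \bigcup_(O in [set O | [/\ open O, (forall i, i \in S -> O `<=` A i)
                     & (forall i, i \notin S -> O `&` A i = set0)]]) O).
  by apply: bigcup_open => O [].
apply/seteqP; split => x.
  by move=> [O [oO Ox h1 h2]]; exists O.
move=> [O [oO h1 h2] Ox]; by exists O.
Qed.

Lemma Ecell_sub (X : topologicalType) (n : nat) (A : 'I_n -> set X) (S : {set 'I_n}) (i : 'I_n) :
  i \in S -> Ecell A S `<=` A i.
Proof. by move=> iS x [O [_ Ox h1 _]]; apply: (h1 i iS). Qed.

Lemma Ecell_notin (X : topologicalType) (n : nat) (A : 'I_n -> set X) (S : {set 'I_n}) (i : 'I_n) (x : X) : 
  i \notin S -> Ecell A S x -> ~ A i x.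
Proof.
move=> iS [O [_ Ox _ h2]] Ax.
have := h2 i iS; move/seteqP => [+ _] => /(_ x (conj Ox Ax)); done.
Qed.

Lemma Ecell_disj (X : topologicalType) (n : nat) (A : 'I_n -> set X) (S T : {set 'I_n}) (y : X) :
  Ecell A S y -> Ecell A T y -> S = T.
Proof.
have key : forall S T, Ecell A S y -> Ecell A T y -> forall i, i \in S -> i \in T.
  move=> S' T' hS hT i iS; apply/negPn/negP => iT.
  exact: (Ecell_notin iT hT (Ecell_sub iS hS)).
move=> hS hT; apply/setP => i; apply/idP/idP; [exact: key | exact: key].
Qed.

Lemma Ecell_refine (X : topologicalType) (n : nat) (A : 'I_n -> set X) :
  (forall i, open (A i)) ->
  forall O, open O -> O !=set0 -> exists S, (O `&` Ecell A S) !=set0.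
Proof.
move=> oA O oO O0.
have main : forall k, exists (S : {set 'I_n}) (O' : set X), [/\ open O', O' !=set0, O' `<=` O,
   (forall i : 'I_n, i \in S -> (i < k)%N) &
   forall i : 'I_n, (i < k)%N -> (i \in S -> O' `<=` A i) /\ (i \notin S -> O' `&` A i = set0)].
  elim=> [|k [S [O' [oO' O'0 O'O Sk h]]]].
    by exists finset.set0, O; split => // i; rewrite inE.
  case: (ltnP k n) => [kn|nk]; last first.
    exists S, O'; split => //.
      by move=> i /Sk /ltnW.
    move=> i ik; apply: h; exact: (leq_trans (ltn_ord i) nk).
  pose i0 := Ordinal kn.
  case: (pselect ((O' `&` A i0) !=set0)) => [ne|e].
    exists (i0 |: S)%SET, (O' `&` A i0); split.
    - exact: openI.
    - exact: ne.
    - by move=> x [/O'O].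
    - move=> i; rewrite !inE => /orP [/eqP -> //|/Sk]; exact: ltnW.
    move=> i; rewrite ltnS leq_eqVlt => /orP [/eqP ik|ik].
      have -> : i = i0 by apply: val_inj.
      by split; [move=> _ x [] | rewrite !inE eqxx].
    have ii0 : (i == i0) = false by apply/negbTE; rewrite -val_eqE /= neq_ltn ik.
    have [h1 h2] := h i ik.
    split; rewrite !inE ii0 /=.
      by move=> iS x [/h1 + _]; apply.
    move=> iS; apply/seteqP; split => // x [[Ox _] Ax].
    by have := h2 iS; move/seteqP => [+ _] => /(_ x (conj Ox Ax)).
  exists S, O'; split => //.
    by move=> i /Sk /ltnW.
  move=> i; rewrite ltnS leq_eqVlt => /orP [/eqP ik|ik]; last exact: h.
  have ei : i = i0 by apply: val_inj.
  have iS : i \notin S by apply/negP => /Sk; rewrite ik ltnn.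
  split; first by rewrite (negbTE iS).
  move=> _; rewrite ei; apply/seteqP; split => // x Hx; exfalso; apply: e; by exists x.
have [S [O' [oO' [x O'x] O'O _ h]]] := main n.
exists S; exists x; split; first exact: O'O.
exists O'; split => // i; have := h i (ltn_ord i); tauto.
Qed.

Lemma Ecell_closure (X : topologicalType) (n : nat) (A : 'I_n -> set X) (x : X)
  (P : {set 'I_n} -> Prop) :
  (forall N, open N -> N x -> exists S, P S /\ (N `&` Ecell A S) !=set0) ->
  exists S, P S /\ closure (Ecell A S) x.
Proof.
move=> H; apply: contrapT => nE.
have : \forall y \near x, forall S, P S -> ~ Ecell A S y.
  apply: filter_forall => S.
  case: (pselect (P S)) => PS; last by apply: nearW => y.
  have : ~ closure (Ecell A S) x by move=> c; apply: nE; exists S.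
  move=> /existsNP [B /not_implyP [nB nI]].
  apply: filterS nB => y By _ Ey; apply: nI; by exists y.
move=> /[dup] + _; rewrite {1}/prop_near1 nbhsE => -[N [oN Nx] NP].
have [S [PS [y [Ny Ey]]]] := H N oN Nx.
exact: (NP y Ny S PS Ey).
Qed.

Theorem mainTheorem12 (X Y Z : topologicalType) (r : Y -> Z) :
  continuous r -> (forall z : Z, exists y : Y, r y = z) ->
  let rstar := fun f : X -> Y => r \o f in
  rstar @` QP X Y `<=` QP X Z /\ dense_in_QP (rstar @` QP X Y).
Proof.
move=> rc rs rstar; split.
  move=> _ [f qf <-] x U V oU Ux oV Vx.
  have orV : open (r @^-1` V) by move/continuousP: rc; apply.
  have [G [oG G0 GU fG]] := qf x U (r @^-1` V) oU Ux orV Vx.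
  exists G; split => // _ [y Gy <-]; apply: (fG (f y)); by exists y.
move=> n xs Us oUs [g [qg bg]].
case: (pselect (exists x : X, True)) => [[x0 _]|nX]; last first.
  pose f := fun x : X => False_rect Y (nX (ex_intro _ x I)).
  exists (rstar f); split.
    by exists f => // x; exfalso; apply: (nX (ex_intro _ x I)).
  by move=> i; exfalso; apply: (nX (ex_intro _ (xs i) I)).
have [sec secK] : {sec : Z -> Y | forall z, r (sec z) = z}.
  exists (fun z => projT1 (cid (rs z))) => z; exact: projT2 (cid (rs z)).
pose A := fun i => \bigcup_(G in [set G | open G /\ g @` G `<=` Us i]) G.
have oA : forall i, open (A i) by move=> i; apply: bigcup_open => G [].
have key : forall x, exists S : {set 'I_n},
    (forall i, xs i = x -> i \in S) /\ closure (Ecell A S) x.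
  move=> x; apply: Ecell_closure => N oN Nx.
  have : \forall z \near g x, forall i, xs i = x -> Us i z.
    apply: filter_forall => i.
    case: (pselect (xs i = x)) => [e|ne]; last by apply: nearW => z.
    have : nbhs (g x) (Us i) by apply: open_nbhs_nbhs; split => //; rewrite -e; apply: bg.
    by apply: filterS => z Uz _.
  move=> /[dup] + _; rewrite {1}/prop_near1 nbhsE => -[V [oV Vx] VP].
  have [G [oG G0 GN gG]] := qg x N V oN Nx oV Vx.
  have [S [y [Gy Ey]]] := Ecell_refine oA oG G0.
  exists S; split; last by exists y; split => //; apply: GN.
  move=> i e; apply/negPn/negP => iS.
  apply: (Ecell_notin iS Ey); exists G => //; split => // _ [u Gu <-].
  apply: (VP _ (gG _ _)) => //; by exists u.
have [Sx HSx] := choice key.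
have Hw0 : forall S : {set 'I_n}, exists w, Ecell A S !=set0 -> Ecell A S w.
  move=> S; case: (pselect (Ecell A S !=set0)) => [[u Eu]|ne].
    by exists u.
  by exists x0 => h; exfalso; apply: ne.
have [w Hw] := choice Hw0.
pose f := fun x => sec (g (w (Sx x))).
have Ene : forall x, Ecell A (Sx x) !=set0.
  move=> x; have [_ c] := HSx x; have [u [Eu _]] := c setT filterT; by exists u.
exists (rstar f); split.
  exists f => //.
  move=> x U V oU Ux oV Vx.
  have [_ c] := HSx x.
  have [y [Ey Uy]] := c U (open_nbhs_nbhs (conj oU Ux)).
  exists (U `&` Ecell A (Sx x)); split.
  - by apply: openI => //; apply: Ecell_open.
  - by exists y.
  - by move=> z [].
  move=> _ [z [Uz Ez] <-].
  have [_ cz] := HSx z.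
  have [u [Eu Eu']] := cz _ (open_nbhs_nbhs (conj (Ecell_open A (Sx x)) Ez)).
  have e : Sx z = Sx x by apply: (Ecell_disj Eu Eu').
  by rewrite /f e.
move=> i; rewrite /rstar /f /= secK.
have [iS _] := HSx (xs i).
have := Ecell_sub (iS i erefl) (Hw _ (Ene (xs i))).
move=> [G [oG gG] Gw]; apply: gG; by exists (w (Sx (xs i))).
Qed.
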